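(* Let $\phi:[0,1]\to[0,1]$ be concave with $\phi(0)=0$, $\phi(1)=1$ and continuous at $0$. Then for every measurable $X$, \[ \|X\|_{TM_\phi}=\sup_{0<t<1}\left\{\frac{1-\phi(1-t)}{t}\,\mathbb{E}[|X|]+\left(1-\frac{1-\phi(1-t)}{t}\right)\operatorname{CVar}_t(|X|)\right\}=\sup_{0<t<1}\operatorname{RIM}_{t,\beta(t)}(|X|), \] where $\beta(t)=\frac{1-\phi(1-t)}{t}$ and $\operatorname{RIM}_{\alpha,\beta}(Z)=\beta\,\mathbb{E}[Z]+(1-\beta)\operatorname{CVar}_\alpha(Z)$.
   Context: $\Omega=[0,1]$ with Lebesgue measure $\mu$; $X^*(\omega)=\inf\{\lambda\ge0:\mu\{|X|>\lambda\}\le\omega\}$; $\mathbb{E}[|X|]=\int_0^1X^*\,d\omega$; for $Z\ge0$, $\operatorname{CVar}_\alpha(Z)=\frac{1}{1-\alpha}\int_0^{1-\alpha}Z^*(\omega)\,d\omega$. The positive translation equivariant Marcinkiewicz norm is $\|X\|_{TM_\phi}=\sup_{0<t<1}\{\frac{\phi(t)}{t}\int_0^tX^*\,d\omega+\frac{\phi(t)-1}{t-1}\int_t^1X^*\,d\omega\}$. *)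

(* Defs.v *)
From HB Require Import structures.
From mathcomp Require Import all_boot all_order all_algebra.
From mathcomp Require Import all_classical all_reals all_analysis.
Set Implicit Arguments. Unset Strict Implicit. Unset Printing Implicit Defensive.
Import Order.TTheory GRing.Theory Num.Theory.
Import numFieldNormedType.Exports.
Local Open Scope classical_set_scope.
Local Open Scope ring_scope.

(* Omega = [0,1] with the Lebesgue measure (restriction of lebesgue_measure). *)

Definition distrib (R : realType) (X : R -> R) (l : R) : \bar R :=
  (@lebesgue_measure R) (`[0, 1] `&` [set w | l < `|X w|]).

(* decreasing rearrangement X^*(w) = inf{ l >= 0 : mu{|X|>l} <= w } (value in \bar R,
   +oo when the set is empty) *)
Definition rearr (R : realType) (X : R -> R) (w : R) : \bar R :=
  ereal_inf [set l%:E | l in [set l : R | 0 <= l /\ (distrib X l <= w%:E)%E]].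

Definition int_rearr (R : realType) (X : R -> R) (a b : R) : \bar R :=
  (\int[@lebesgue_measure R]_(w in `[a, b]%classic) rearr X w)%E.

Definition expect (R : realType) (Z : R -> R) : \bar R :=
  (\int[@lebesgue_measure R]_(w in `[0%R, 1%R]%classic) (Z w)%:E)%E.

Definition CVar (R : realType) (alpha : R) (Z : R -> R) : \bar R :=
  (((1 - alpha)^-1)%:E * int_rearr Z 0 (1 - alpha))%E.

Definition RIM (R : realType) (alpha beta : R) (Z : R -> R) : \bar R :=
  (beta%:E * expect Z + (1 - beta)%:E * CVar alpha Z)%E.

Definition TM_norm (R : realType) (phi : R -> R) (X : R -> R) : \bar R :=
  ereal_sup [set ((phi t / t)%:E * int_rearr X 0 t
                  + ((phi t - 1) / (t - 1))%:E * int_rearr X t 1)%E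
            | t in `]0, 1[%classic].

Definition beta_of (R : realType) (phi : R -> R) (t : R) : R := (1 - phi (1 - t)) / t.

(* Main.v *)
Require Import Defs.
From HB Require Import structures.
From mathcomp Require Import all_boot all_order all_algebra.
From mathcomp Require Import all_classical all_reals all_analysis.
From mathcomp Require Import measurable_realfun.
From mathcomp Require Import ring lra.
Import Order.TTheory GRing.Theory Num.Theory.
Import numFieldNormedType.Exports.
Local Open Scope classical_set_scope.
Local Open Scope ring_scope.

Section S.
Context (R : realType).
Local Notation mu := (@lebesgue_measure R).
Definition PP := uniform_prob (@ltr01 R).

Lemma unifE (A : set R) : measurable A -> PP A = mu (A `&` `[0, 1]).
Proof.
move=> mA; rewrite /PP /uniform_prob integral_uniform_pdf.
rewrite (eq_integral (cst 1%:E)); last first.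
  move=> x; rewrite inE => -[_]; rewrite /= in_itv/= /uniform_pdf => ->.
  by rewrite subr0 invr1.
by rewrite integral_cst ?mul1e//; apply: measurableI.
Qed.

Lemma nonincr_in_measurable (D : set R) (f : R -> R) : measurable D ->
  is_interval D -> {in D &, forall x y, x <= y -> f y <= f x} -> measurable_fun D f.
Proof.
move=> mD iD f_ni.
apply: (measurability (@RGenCInfty.G R)) => [|/= _ [_] [r] -> <-].
  exact: RGenCInfty.measurableE.
apply: is_interval_measurable => s t/= [Ds fs] [Dt ft] u /andP[su ut].
have Du : D u by apply: (iD s t) => //; rewrite su ut.
split => //; move: fs ft; rewrite /= !in_itv/= !andbT => fs ft.
by rewrite (le_trans ft)// f_ni ?inE.
Qed.

Context (X : R -> R) (mX : measurable_fun (`[0, 1] : set R) X).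

Definition Yf : measurableTypeR R -> R := (fun w => `|X w|) \_ (`[0, 1] : set R).
Lemma mYf : measurable_fun setT Yf.
Proof.
have h : measurable_fun (`[0, 1]%classic : set R) (fun w : R => `|X w|).
  by apply: measurableT_comp.
exact: (proj1 (measurable_restrictT _ _) h).
Qed.
HB.instance Definition _ := isMeasurableFun.Build _ _ _ _ Yf mYf.
Definition Yrv : {RV PP >-> R} := Yf.
Lemma Yf_ge0 w : 0 <= Yf w.
Proof. by rewrite /Yf patchE; case: ifP. Qed.
Lemma EY : ('E_PP[Yrv] = expect (fun w => `|X w|%R))%E.
Proof.
rewrite expectation_def integral_uniform//=; last 2 first.
  by apply/measurable_EFinP; exact: mYf.
  by move=> x; rewrite lee_fin Yf_ge0.
rewrite subr0 invr1 mul1e /expect; apply: eq_integral => x xI.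
by rewrite /Yf patchE xI.
Qed.

Lemma ccdfY r : ccdf Yrv r = distrib X r.
Proof.
change (PP (Yf @^-1` `]r, +oo[%classic) = distrib X r); rewrite unifE; last first.
  by rewrite -[_ @^-1` _]setTI; apply: mYf => //; exact: measurable_itv.
rewrite /distrib setIC; congr (mu _); apply/seteqP; split => w /=.
  move=> [w01]; rewrite /Yrv /Yf patchE mem_set// in_itv/= andbT => h; by split.
move=> [w01 h]; split => //; rewrite /Yrv /Yf patchE mem_set// in_itv/= andbT //.
Qed.

Lemma d_ge0 r : (0 <= distrib X r)%E.
Proof. exact: measure_ge0. Qed.

Lemma d_le1 r : (distrib X r <= 1)%E.
Proof.
by rewrite -ccdfY; apply: probability_le1; exact: measurable_itv.
Qed.

Lemma d_noninc r s : r <= s -> (distrib X s <= distrib X r)%E.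
Proof. by move=> rs; rewrite -!ccdfY; apply: ccdf_nonincreasing. Qed.

Lemma rearr_ge0 w : (0 <= rearr X w)%E.
Proof. by apply/ereal_infP => _ [l [l0 _] <-]; rewrite lee_fin. Qed.

Lemma rearr_le w l : 0 <= l -> (distrib X l <= w%:E)%E -> (rearr X w <= l%:E)%E.
Proof. by move=> l0 dl; apply: ge_ereal_inf; exists l%:E => //; exists l. Qed.

Lemma rearr_gt w r : (w%:E < distrib X r)%E -> (r%:E < rearr X w)%E.
Proof.
move=> h.
have h' : (w%:E < ccdf Yrv r)%E by rewrite ccdfY.
have [i i0 Hi] := ccdf_right_continuous (open_ereal_gt' h').
have rs : r < r + i / 2 by rewrite ltrDl divr_gt0.
have ds : (w%:E < distrib X (r + i / 2))%E.
  rewrite -ccdfY; apply: (Hi (r + i / 2)) => //=.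
  rewrite opprD addrA subrr sub0r normrN gtr0_norm ?divr_gt0//.
  by rewrite ltr_pdivrMr// ltr_pMr// ltr1n.
apply: (@lt_le_trans _ _ (r + i / 2)%:E); first by rewrite lte_fin.
apply/ereal_infP => _ [l [l0 dl] <-]; rewrite lee_fin.
rewrite leNgt; apply/negP => ls.
have := @d_noninc _ _ (ltW ls); rewrite leNgt => /negP; apply.
exact: le_lt_trans dl ds.
Qed.

Lemma rearr_fin w : 0 < w -> exists2 l, 0 <= l & (distrib X l <= w%:E)%E.
Proof.
move=> w0.
have h : (0 < w%:E)%E by rewrite lte_fin.
have [M [_ HM]] := cvg_ccdfy0 Yrv (open_ereal_lt' h).
exists (Num.max 0 (M + 1)); first by rewrite le_max lexx.
rewrite -ccdfY; apply/ltW/HM.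
by rewrite lt_max orbC ltrDl ltr01.
Qed.

Lemma rearr_fin_num w : 0 < w -> rearr X w \is a fin_num.
Proof.
move=> w0; have [l l0 dl] := rearr_fin _ w0.
rewrite ge0_fin_numE ?rearr_ge0//.
exact: le_lt_trans (rearr_le _ _ l0 dl) (ltry _).
Qed.

Lemma rearr_gtE w r : 0 <= r -> (r%:E < rearr X w)%E = (w%:E < distrib X r)%E.
Proof.
move=> r0; apply/idP/idP; last exact: rearr_gt.
apply: contraTT; rewrite -!leNgt => h; exact: rearr_le.
Qed.

Lemma rearr_noninc w v : w <= v -> (rearr X v <= rearr X w)%E.
Proof.
move=> wv; apply: le_ereal_inf => _ [l [l0 dl] <-]; exists l => //; split => //.
by apply: (le_trans dl); rewrite lee_fin.
Qed.

Definition Gf (w : R) : R := fine (rearr X w).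
Definition Gp : measurableTypeR R -> R := Gf \_ (`]0, 1] : set R).

Lemma mGf : measurable_fun (`]0, 1] : set R) Gf.
Proof.
apply: nonincr_in_measurable => //; first exact: interval_is_interval.
move=> x y; rewrite !inE /= !in_itv /= => /andP[x0 _] /andP[y0 _] xy.
by rewrite /Gf fine_le ?rearr_fin_num ?rearr_noninc// (lt_le_trans x0).
Qed.

Lemma mGp : measurable_fun setT Gp.
Proof. exact: (proj1 (measurable_restrictT _ _) mGf). Qed.
HB.instance Definition _ := isMeasurableFun.Build _ _ _ _ Gp mGp.
Definition Grv : {RV PP >-> R} := Gp.

Lemma Gp_ge0 w : 0 <= Gp w.
Proof. by rewrite /Gp patchE; case: ifP => // _; rewrite /Gf fine_ge0 ?rearr_ge0. Qed.

Lemma d_fin r : distrib X r \is a fin_num.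
Proof. by rewrite ge0_fin_numE ?d_ge0// (le_lt_trans (d_le1 r)) ?ltry. Qed.

Lemma ccdfG r : 0 <= r -> ccdf Grv r = distrib X r.
Proof.
move=> r0.
change (PP (Gp @^-1` `]r, +oo[%classic) = distrib X r); rewrite unifE; last first.
  by rewrite -[_ @^-1` _]setTI; apply: mGp => //; exact: measurable_itv.
set dr := fine (distrib X r).
have drE : distrib X r = dr%:E by rewrite fineK ?d_fin.
have dr0 : 0 <= dr by rewrite fine_ge0 ?d_ge0.
have dr1 : dr <= 1 by rewrite -lee_fin -drE d_le1.
transitivity (mu `]0, dr[); last first.
  rewrite lebesgue_measure_itv /= lte_fin drE; case: ifPn => [_|]; first by rewrite sube0.
  by rewrite -leNgt => h; have -> : dr = 0 by apply/eqP; rewrite eq_le h dr0.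
congr (mu _); apply/seteqP; split => w /=.
  move=> [+ w01]; rewrite /Gp patchE; case: ifPn => [|_]; last first.
    by rewrite in_itv /= andbT ltNge r0.
  rewrite inE /= !in_itv /= andbT => /andP[w0 w1] h.
  rewrite w0 /= -lte_fin -drE -rearr_gtE// /Gf -[rearr X w]fineK ?rearr_fin_num// lte_fin.
rewrite inE /= in_itv /= => /andP[w0 wd]; rewrite !bnd_simp in w0 wd.
have w1 : w <= 1 by rewrite ltW// (lt_le_trans wd).
split; last by have : (w : R) \in `[0, 1]%R by rewrite in_itv /= (ltW w0) w1.
rewrite /Gp patchE mem_set; last by rewrite /= in_itv /= w0 w1.
by rewrite andbT /Gf -lte_fin fineK ?rearr_fin_num// rearr_gtE// drE lte_fin.
Qed.

Lemma mrearr : measurable_fun (`]0, 1] : set R) (rearr X).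
Proof.
apply: (eq_measurable_fun (EFin \o Gf)).
  move=> x; rewrite inE /= in_itv /= => /andP[x0 _].
  by rewrite /Gf /= fineK ?rearr_fin_num.
by apply/measurable_EFinP; exact: mGf.
Qed.

Lemma EG : ('E_PP[Grv] = int_rearr X 0 1)%E.
Proof.
rewrite expectation_def integral_uniform//=; last 2 first.
  by apply/measurable_EFinP; exact: mGp.
  by move=> x; rewrite lee_fin Gp_ge0.
rewrite subr0 invr1 mul1e /int_rearr.
rewrite -[RHS]integral_itv_obnd_cbnd; last exact: mrearr.
rewrite -[LHS]integral_itv_obnd_cbnd; last first.
  apply/measurable_EFinP; apply: (measurable_funS _ _ mGp) => //.
apply: eq_integral => x; rewrite inE /= in_itv /= => /andP[x0 x1].
rewrite /Grv /Gp patchE mem_set; last by rewrite /= in_itv /= x0 x1.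
by rewrite /Gf fineK ?rearr_fin_num.
Qed.

Lemma expect_rearr : expect (fun w => `|X w|%R) = int_rearr X 0 1.
Proof.
rewrite -EY -EG !ge0_expectation_ccdf; last 2 first.
  exact: Gp_ge0.
  exact: Yf_ge0.
apply: eq_integral => r r0.
have r0' : 0 <= r by move: r0; rewrite inE /= in_itv /= andbT.
by rewrite ccdfY ccdfG.
Qed.

Lemma int_split t : 0 < t < 1 -> int_rearr X 0 1 = (int_rearr X 0 t + int_rearr X t 1)%E.
Proof.
move=> /andP[t0 t1].
have sub1 : (`]0, t] : set R) `<=` `]0, 1].
  by apply: subset_itvl; rewrite bnd_simp; exact: ltW.
have sub2 : (`]t, 1] : set R) `<=` `]0, 1].
  by apply: subset_itvr; rewrite bnd_simp; exact: ltW.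
have m1 := measurable_funS (measurable_itv _) sub1 mrearr.
have m2 := measurable_funS (measurable_itv _) sub2 mrearr.
rewrite /int_rearr -integral_itv_obnd_cbnd; last exact: mrearr.
rewrite -(integral_itv_obnd_cbnd m1) -(integral_itv_obnd_cbnd m2).
rewrite (@itv_bndbnd_setU _ _ _ (BRight t)); [|by rewrite bnd_simp; exact: ltW|by rewrite bnd_simp; exact: ltW].
rewrite ge0_integral_setU //.
- by rewrite -itv_bndbnd_setU ?bnd_simp; [exact: mrearr|exact: ltW|exact: ltW].
- by move=> x _; exact: rearr_ge0.
- apply/disj_setPS => x [] /=; rewrite !in_itv /= => /andP[_ xt] /andP[tx _].
  by move: (le_lt_trans xt tx); rewrite ltxx.
Qed.

Lemma distrib_abs : distrib (fun w => `|X w|) = distrib X.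
Proof.
by apply/funext => l; rewrite /distrib; congr (_ (_ `&` _)); apply/funext => w /=; rewrite normr_id.
Qed.

Lemma int_rearr_abs a b : int_rearr (fun w => `|X w|) a b = int_rearr X a b.
Proof. by rewrite /int_rearr /rearr distrib_abs. Qed.

Lemma int_rearr_ge0 a b : (0 <= int_rearr X a b)%E.
Proof. by apply: integral_ge0 => x _; exact: rearr_ge0. Qed.

Lemma term_eq (phi : R -> R) t : 0 < t < 1 -> t <= phi t <= 1 ->
  ((phi t / t)%:E * int_rearr X 0 t + ((phi t - 1) / (t - 1))%:E * int_rearr X t 1)%E =
  ((beta_of phi (1 - t))%:E * expect (fun w : R => `|X w|%R)
    + (1 - beta_of phi (1 - t))%:E * CVar (1 - t) (fun w : R => `|X w|%R))%E.
Proof.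
move=> /andP[t0 t1] /andP[tp p1].
have e : 1 - (1 - t) = t by ring.
rewrite /beta_of /CVar e int_rearr_abs expect_rearr (@int_split t); last by rewrite t0 t1.
have := int_rearr_ge0 0 t; have := int_rearr_ge0 t 1.
move: (int_rearr X 0 t) (int_rearr X t 1) => A B B0 A0.
set b := (1 - phi t) / (1 - t).
have t1' : 0 < 1 - t by rewrite subr_gt0.
have b0 : 0 <= b by rewrite divr_ge0// ?subr_ge0// ltW.
have b1 : 0 <= 1 - b.
  by rewrite subr_ge0 /b ler_pdivrMr// mul1r lerB// .
rewrite ge0_muleDr// muleA -EFinM addeAC -(ge0_muleDl A) ?lee_fin//; last by rewrite mulr_ge0// invr_ge0 ltW.
have tn0 : t != 0 by rewrite gt_eqF.
have tn1 : 1 - t != 0 by rewrite gt_eqF.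
have tn1' : t - 1 != 0 by rewrite -opprB oppr_eq0.
congr (_ * _ + _ * _)%E; congr EFin; rewrite /b.
  by field; rewrite tn0 tn1.
by field; rewrite tn1 tn1'.
Qed.
End S.

Theorem theorem22 (R : realType) (phi : R -> R)
  (phi_range : forall x, 0 <= x <= 1 -> 0 <= phi x <= 1)
  (phi_concave : forall x y l, 0 <= x <= 1 -> 0 <= y <= 1 -> 0 <= l <= 1 ->
      l * phi x + (1 - l) * phi y <= phi (l * x + (1 - l) * y))
  (phi0 : phi 0 = 0) (phi1 : phi 1 = 1)
  (phi_cont0 : phi x @[x --> 0^'+] --> phi 0)
  (X : R -> R) (mX : measurable_fun (`[0, 1] : set R) X) :
  TM_norm phi X =
    ereal_sup [set ((beta_of phi t)%:E * expect (fun w : R => `|X w|%R)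
                    + (1 - beta_of phi t)%:E * CVar t (fun w : R => `|X w|%R))%E
              | t in (`]0, 1[ : set R)]
  /\
  ereal_sup [set ((beta_of phi t)%:E * expect (fun w : R => `|X w|%R)
                  + (1 - beta_of phi t)%:E * CVar t (fun w : R => `|X w|%R))%E
            | t in (`]0, 1[ : set R)]
    = ereal_sup [set RIM t (beta_of phi t) (fun w : R => `|X w|%R) | t in (`]0, 1[ : set R)].
Proof.
split; last by [].
have phige t : 0 < t < 1 -> t <= phi t <= 1.
  move=> /andP[t0 t1].
  have ht : 0 <= t <= 1 by rewrite !ltW.
  have := phi_concave 1 0 t; rewrite phi0 phi1 !mulr1 !mulr0 !addr0 => -> //; last first.
    by rewrite lexx ler01.
    by rewrite lexx ler01.
  by case/andP: (phi_range t ht).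
rewrite /TM_norm; congr ereal_sup; apply/seteqP; split => _ [t ht <-].
- have ht' : 0 < t < 1 by move: ht; rewrite /= in_itv.
  exists (1 - t).
    move: ht'; rewrite /= in_itv /= => /andP[t0 t1].
    by rewrite subr_gt0 t1 ltrBlDr ltrDl t0.
  by rewrite (@term_eq _ _ mX) // phige.
- have ht' : 0 < t < 1 by move: ht; rewrite /= in_itv.
  have hs : 0 < 1 - t < 1.
    move: ht' => /andP[t0 t1].
    by rewrite subr_gt0 t1 ltrBlDr ltrDl t0.
  exists (1 - t); first by rewrite /= in_itv.
  have e : 1 - (1 - t) = t by ring.
  by rewrite (@term_eq _ _ mX) ?phige // e.
Qed.
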